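(* There is a function $C_1(t,\epsilon)$ such that the following holds for every positive integer $t$ and every $\epsilon\in(0,1)$: if $G$ is a bipartite graph with parts $A,B$ which is $\overline{K_{t,t}}$-free and satisfies $|B|\geq \epsilon^{-1}t$, then $A$ contains at most $C_1(t,\epsilon)$ vertices of degree at most $(1-\epsilon)|B|$.
   Context: A bipartite graph with parts $A,B$ is called $\overline{K_{t,t}}$-free if for every $t$-set $A_0\subseteq A$ and every $t$-set $B_0\subseteq B$ there is at least one edge between $A_0$ and $B_0$ (equivalently, the bipartite complement contains no $K_{t,t}$). *)

(* Defs.v *)
From mathcomp Require Import all_boot.
From Stdlib Require Import Reals.
Set Implicit Arguments. Unset Strict Implicit. Unset Printing Implicit Defensive.

Definition coKtt_free (A B : finType) (E : A -> B -> bool) (t : nat) : Prop :=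
  forall (A0 : {set A}) (B0 : {set B}), #|A0| = t -> #|B0| = t ->
    exists a b, [/\ a \in A0, b \in B0 & E a b].

Definition degA (A B : finType) (E : A -> B -> bool) (a : A) : nat :=
  #|[set b | E a b]|.

(* Main.v *)
Require Import Defs.
From mathcomp Require Import all_boot zify.
Set Implicit Arguments. Unset Strict Implicit. Unset Printing Implicit Defensive.
Lemma card_sep (T : finType) (X : {set T}) (P : pred T) :
  #|[set x in X | P x]| = \sum_(x in X) (P x : nat).
Proof.
rewrite -sum1_card big_mkcond /= [RHS]big_mkcond /=.
by apply: eq_bigr => x _; rewrite !inE; case: (x \in X); case: (P x).
Qed.

Lemma sub_of_card (T : finType) (S : {set T}) k : k <= #|S| ->
  exists S0 : {set T}, S0 \subset S /\ #|S0| = k.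
Proof.
elim: k => [|k IH] Hk; first by exists set0; rewrite sub0set cards0.
have [S0 [HS HC]] := IH (ltnW Hk).
have : 0 < #|S :\: S0| by rewrite cardsDS // HC subn_gt0.
case/card_gt0P => x; rewrite inE => /andP [Hx1 Hx2].
exists (x |: S0); split.
  by rewrite subUset sub1set Hx2 HS.
by rewrite cardsU1 Hx1 HC.
Qed.
Definition ndeg (A B : finType) (E : A -> B -> bool) (a : A) : nat :=
  #|[set b | ~~ E a b]|.

Lemma core (A B : finType) (E : A -> B -> bool) (t D : nat) :
  coKtt_free E t ->
  forall j (S : {set A}) (T : {set B}), #|T| + j = t ->
  (forall a b, a \in S -> b \in T -> ~~ E a b) ->
  (forall a, a \in S -> D <= ndeg E a) ->
  #|S| * expn (D - t.-1) j <= t.-1 * expn #|B| j.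
Proof.
move=> Hfree; elim=> [|j IH] S T HT HST HD.
  rewrite !expn0 !muln1 addn0 in HT *.
  case: (leqP #|S| t.-1) => // Hlt.
  have [S0 [HS0 HS0c]] : exists S0 : {set A}, S0 \subset S /\ #|S0| = t.
    by apply: sub_of_card; lia.
  have [a [b [Ha Hb Hab]]] := Hfree S0 T HS0c HT.
  by move: (HST a b (subsetP HS0 a Ha) Hb); rewrite Hab.
set m := D - t.-1.
set f := fun b => #|[set a in S | ~~ E a b]|.
have Hsum : \sum_(b in ~:T) f b = \sum_(a in S) #|[set b in ~:T | ~~ E a b]|.
  rewrite /f.
  under eq_bigr do rewrite card_sep.
  rewrite exchange_big /=.
  by apply: eq_bigr => a _; rewrite card_sep.
have Hlow : #|S| * m <= \sum_(b in ~:T) f b.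
  rewrite Hsum -sum_nat_const; apply: leq_sum => a Ha.
  have H1 := HD a Ha.
  have : ndeg E a <= #|T :|: [set b in ~:T | ~~ E a b]|.
    apply: subset_leq_card; apply/subsetP => b; rewrite !inE => Hb.
    by rewrite Hb andbT orbN.
  rewrite cardsU /m; lia.
case: (set_0Vmem (~:T)) => [HT0 | [b0 Hb0]].
  move: Hlow; rewrite HT0 big_set0 => Hlow.
  have -> : #|S| * expn m j.+1 = 0 by rewrite expnS mulnA; move: Hlow; rewrite leqn0 => /eqP ->.
  done.
case: (@arg_maxnP _ b0 (mem (~:T)) f Hb0) => bm Hbm Hmax.
have Hup : \sum_(b in ~:T) f b <= #|B| * f bm.
  apply: (@leq_trans (\sum_(b in ~:T) f bm)); first exact: leq_sum.
  rewrite sum_nat_const leq_mul2r; apply/orP; right.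
  by rewrite -(cardsC T) leq_addl.
have HbmT : bm \notin T.
  by rewrite -in_setC; exact: Hbm.
have HIH := IH [set a in S | ~~ E a bm] (bm |: T).
have := HIH ltac:(rewrite cardsU1 HbmT; lia).
move=> /(_ _ _) H.
have {H} H : f bm * expn m j <= t.-1 * expn #|B| j.
  apply: H.
    move=> a b; rewrite !inE => /andP [Ha Hab] /orP [/eqP -> //|Hb].
    exact: HST.
  by move=> a; rewrite inE => /andP [Ha _]; apply: HD.
rewrite expnS mulnCA mulnA (expnS #|B|) mulnCA.
apply: (@leq_trans (#|B| * f bm * expn m j)).
  by rewrite leq_mul2r (mulnC m) (leq_trans Hlow Hup) orbT.
by rewrite -mulnA leq_mul2l H orbT.
Qed.
From Stdlib Require Import Reals Lra Lia ZArith.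

Lemma real_part (t D n c : nat) (eps : R) : (0 < t)%nat -> (0 < eps)%R ->
  (eps * INR n <= INR D)%R -> (INR t <= INR c * eps)%R -> (t <= D)%nat ->
  (n <= c * (D - t.-1))%nat.
Proof.
move=> Ht He H1 H2 H3.
have Ht' : (1 <= INR t)%R by apply: (le_INR 1); apply/leP.
have HD : (INR t <= INR D)%R by apply: le_INR; apply/leP.
have Hm : INR (D - t.-1) = (INR D - INR t + 1)%R.
  rewrite minus_INR; last by apply/leP; lia.
  have -> : t = (t.-1).+1 by lia.
  rewrite S_INR /=. lra.
apply/leP; apply: INR_le; rewrite mult_INR Hm.
have Hc : (0 <= INR c)%R by apply: pos_INR.
have K : (INR t * (INR D - INR t + 1) >= INR D)%R by nra.
have K2 : (eps * (INR c * (INR D - INR t + 1)) >= eps * INR n)%R by nra.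
apply: (Rmult_le_reg_l eps) => //; lra.
Qed.

Lemma up_nat (x : R) : (0 < x)%R -> (x <= INR (Z.to_nat (up x)))%R.
Proof.
move=> Hx; have [H1 _] := archimed x.
have Hz : (0 <= up x)%Z by apply: le_IZR; lra.
rewrite INR_IZR_INZ Z2Nat.id //; lra.
Qed.

Theorem mainTheorem3 :
  exists C1 : nat -> R -> nat,
    forall (t : nat) (eps : R), (0 < t)%nat -> (0 < eps < 1)%R ->
    forall (A B : finType) (E : A -> B -> bool),
      coKtt_free E t ->
      (INR #|B| >= INR t / eps)%R ->
      (#|[set a : A | if Rle_dec (INR (degA E a)) ((1 - eps) * INR #|B|) then true else false]| <= C1 t eps)%nat.
Proof.
exists (fun t eps => t * expn (Z.to_nat (up (INR t / eps))) t)%nat.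
move=> t eps Ht [He0 He1] A B E Hfree HB.
set c := Z.to_nat (up (INR t / eps)).
set S := [set a : A | _].
have Htp : (0 < INR t)%R by apply: (lt_INR 0); apply/ltP.
have Hc : (INR t <= INR c * eps)%R.
  have := up_nat (Rdiv_lt_0_compat _ _ Htp He0).
  rewrite -/c => H.
  have -> : INR t = (INR t / eps * eps)%R by field; lra.
  apply: Rmult_le_compat_r; lra.
have HSa : forall a, a \in S -> (eps * INR #|B| <= INR (ndeg E a))%R.
  move=> a; rewrite inE; case: Rle_dec => // Hle _.
  have Hsum : (degA E a + ndeg E a)%nat = #|B|.
    rewrite /degA /ndeg -(cardsC [set b | E a b]); congr (_ + _)%nat.
    by apply: eq_card => b; rewrite !inE.
  have : INR #|B| = (INR (degA E a) + INR (ndeg E a))%R by rewrite -Hsum; exact: plus_INR.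
  lra.
have HepsB : (INR t <= eps * INR #|B|)%R.
  have -> : INR t = (eps * (INR t / eps))%R by field; lra.
  apply: Rmult_le_compat_l; lra.
case: (set_0Vmem S) => [-> | [a0 Ha0]]; first by rewrite cards0.
case: (@arg_minnP _ a0 (mem S) (ndeg E) Ha0) => amin Hamin Hmin.
set D := ndeg E amin.
have HtD : (t <= D)%nat.
  apply/leP; apply: INR_le; have := HSa amin Hamin; rewrite -/D; lra.
have HnD : (#|B| <= c * (D - t.-1))%nat.
  by apply: (@real_part t D _ c eps) => //; apply: HSa.
have Hcore := @core A B E t D Hfree t S set0 ltac:(rewrite cards0; lia)
  ltac:(by move=> a b _; rewrite inE) (fun a Ha => Hmin a Ha).
set m := (D - t.-1)%nat in Hcore HnD.
have Hm : (0 < m)%nat by rewrite /m; lia.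
have : (#|S| * expn m t <= t.-1 * expn c t * expn m t)%nat.
  apply: (leq_trans Hcore).
  by rewrite -mulnA -expnMn leq_mul2l leq_exp2r // HnD orbT.
rewrite leq_pmul2r ?expn_gt0 ?Hm // => H.
apply: (leq_trans H); rewrite leq_mul2r; apply/orP; right; lia.
Qed.
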